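(* Let $A$ be a constant real $3\times3$ matrix, $\vec\mu_0\in\mathbb{R}^3$ constant, and $\vec\mu(\vec\gamma)=A\vec\gamma+\vec\mu_0$. Then $\Pi_{\vec\mu}$ defines a Poisson bracket on $\mathbb{R}^3\times(\mathbb{R}^3\setminus\{0\})$ if and only if $A$ is symmetric. In that case $C(\vec M,\vec\gamma)=\tfrac12\vec\gamma\cdot A\vec\gamma+(\vec M+\vec\mu_0)\cdot\vec\gamma$ is a Casimir function of $\Pi_{\vec\mu}$.
   Context: Coordinates on $\mathbb{R}^6$ are $(\vec M,\vec\gamma)=(M_1,M_2,M_3,\gamma_1,\gamma_2,\gamma_3)$. For a smooth $\vec\mu=(\mu_1,\mu_2,\mu_3)$ of $(\vec M,\vec\gamma)$, $\Pi_{\vec\mu}$ is the skew-symmetric $6\times6$ matrix $$\Pi_{\vec\mu}=\begin{bmatrix}0&-M_3-\mu_3&M_2+\mu_2&0&-\gamma_3&\gamma_2\\ M_3+\mu_3&0&-M_1-\mu_1&\gamma_3&0&-\gamma_1\\ -M_2-\mu_2&M_1+\mu_1&0&-\gamma_2&\gamma_1&0\\ 0&-\gamma_3&\gamma_2&0&0&0\\ \gamma_3&0&-\gamma_1&0&0&0\\ -\gamma_2&\gamma_1&0&0&0&0\end{bmatrix},$$ it ''defines a Poisson bracket'' if $\{f,g\}_{\vec\mu}=(\nabla f)^T\Pi_{\vec\mu}\nabla g$ satisfies the Jacobi identity, and a Casimir function is a smooth $C$ with $\Pi_{\vec\mu}\nabla C=0$. *)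

(* Defs.v *)
From Stdlib Require Import Reals ClassicalEpsilon List.
Open Scope R_scope.

(* A point (M1,M2,M3,gamma1,gamma2,gamma3) of R^6; coordinates indexed 0..5. *)
Record pt := mkpt { p0 : R; p1 : R; p2 : R; p3 : R; p4 : R; p5 : R }.

Definition coord (x : pt) (i : nat) : R :=
  match i with
  | 0 => p0 x | 1 => p1 x | 2 => p2 x | 3 => p3 x | 4 => p4 x | _ => p5 x
  end.

Definition upd (x : pt) (i : nat) (t : R) : pt :=
  match i with
  | 0 => mkpt t (p1 x) (p2 x) (p3 x) (p4 x) (p5 x)
  | 1 => mkpt (p0 x) t (p2 x) (p3 x) (p4 x) (p5 x)
  | 2 => mkpt (p0 x) (p1 x) t (p3 x) (p4 x) (p5 x)
  | 3 => mkpt (p0 x) (p1 x) (p2 x) t (p4 x) (p5 x)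
  | 4 => mkpt (p0 x) (p1 x) (p2 x) (p3 x) t (p5 x)
  | _ => mkpt (p0 x) (p1 x) (p2 x) (p3 x) (p4 x) t
  end.

Definition U (x : pt) : Prop := ~ (p3 x = 0 /\ p4 x = 0 /\ p5 x = 0).

Definition has_partial (f : pt -> R) (i : nat) (x : pt) (l : R) : Prop :=
  derivable_pt_lim (fun t => f (upd x i t)) (coord x i) l.

(* the i-th partial derivative (its value is meaningful where it exists) *)
Definition partial (i : nat) (f : pt -> R) (x : pt) : R :=
  epsilon (inhabits 0) (fun l => has_partial f i x l).

Fixpoint iter_partial (l : list nat) (f : pt -> R) : pt -> R :=
  match l with
  | nil => f
  | i :: l' => partial i (iter_partial l' f)
  end.

Definition continuous_at6 (f : pt -> R) (x : pt) : Prop :=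
  forall eps, 0 < eps -> exists delta, 0 < delta /\
    forall y, (forall i, (i < 6)%nat -> Rabs (coord y i - coord x i) < delta) ->
      Rabs (f y - f x) < eps.

Definition smooth (f : pt -> R) : Prop :=
  forall l : list nat, (forall i, In i l -> (i < 6)%nat) ->
  forall x, U x ->
    continuous_at6 (iter_partial l f) x /\
    (forall i, (i < 6)%nat -> exists d, has_partial (iter_partial l f) i x d).

(* The matrix Pi_mu at x; mu x k is mu_{k+1} (k = 0,1,2). *)
Definition Pi (mu : pt -> nat -> R) (x : pt) (i j : nat) : R :=
  let M1 := p0 x in let M2 := p1 x in let M3 := p2 x in
  let g1 := p3 x in let g2 := p4 x in let g3 := p5 x in
  let m1 := mu x 0%nat in let m2 := mu x 1%nat in let m3 := mu x 2%nat in
  match i, j with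
  | 0, 1 => - (M3 + m3) | 0, 2 => M2 + m2 | 0, 4 => - g3 | 0, 5 => g2
  | 1, 0 => M3 + m3 | 1, 2 => - (M1 + m1) | 1, 3 => g3 | 1, 5 => - g1
  | 2, 0 => - (M2 + m2) | 2, 1 => M1 + m1 | 2, 3 => - g2 | 2, 4 => g1
  | 3, 1 => - g3 | 3, 2 => g2
  | 4, 0 => g3 | 4, 2 => - g1
  | 5, 0 => - g2 | 5, 1 => g1
  | _, _ => 0
  end.

Definition bracket (mu : pt -> nat -> R) (f g : pt -> R) (x : pt) : R :=
  sum_f_R0 (fun i => sum_f_R0 (fun j =>
    partial i f x * Pi mu x i j * partial j g x) 5) 5.

Definition is_Poisson (mu : pt -> nat -> R) : Prop :=
  forall f g h : pt -> R, smooth f -> smooth g -> smooth h ->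
  forall x, U x ->
    bracket mu f (bracket mu g h) x + bracket mu g (bracket mu h f) x
    + bracket mu h (bracket mu f g) x = 0.

Definition Casimir (mu : pt -> nat -> R) (C : pt -> R) : Prop :=
  smooth C /\
  forall x, U x -> forall i, (i < 6)%nat ->
    sum_f_R0 (fun j => Pi mu x i j * partial j C x) 5 = 0.

(* gamma_{k+1} for k = 0,1,2 and M_{k+1} likewise *)
Definition gam (x : pt) (k : nat) : R := coord x (3 + k).
Definition Mc (x : pt) (k : nat) : R := coord x k.

(* mu(gamma) = A gamma + mu0; A k j is the (k+1,j+1) entry *)
Definition mu_lin (A : nat -> nat -> R) (mu0 : nat -> R) (x : pt) (k : nat) : R :=
  A k 0%nat * gam x 0 + A k 1%nat * gam x 1 + A k 2%nat * gam x 2 + mu0 k.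

Definition Cas (A : nat -> nat -> R) (mu0 : nat -> R) (x : pt) : R :=
  / 2 * sum_f_R0 (fun k => gam x k * sum_f_R0 (fun j => A k j * gam x j) 2) 2
  + sum_f_R0 (fun k => (Mc x k + mu0 k) * gam x k) 2.

(* Main.v *)
Require Import Defs.
From Stdlib Require Import Reals Lra Lia ClassicalEpsilon FunctionalExtensionality List.
Open Scope R_scope.


Lemma coord_upd x j t i :
  coord (upd x j t) i = if Nat.eqb (Nat.min i 5) (Nat.min j 5) then t else coord x i.
Proof.
  destruct i as [|[|[|[|[|[|i]]]]]]; destruct j as [|[|[|[|[|[|j]]]]]]; reflexivity.
Qed.

Lemma upd_upd x i a b : upd (upd x i a) i b = upd x i b.
Proof. destruct i as [|[|[|[|[|[|i]]]]]]; reflexivity. Qed.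

Lemma upd_comm x i j a b : (i < 6)%nat -> (j < 6)%nat -> i <> j ->
  upd (upd x i a) j b = upd (upd x j b) i a.
Proof.
  intros Hi Hj Hij.
  destruct i as [|[|[|[|[|[|i]]]]]]; try lia; destruct j as [|[|[|[|[|[|j]]]]]]; try lia; reflexivity.
Qed.

Lemma upd_id x i : upd x i (coord x i) = x.
Proof. destruct x; destruct i as [|[|[|[|[|[|i]]]]]]; reflexivity. Qed.

Lemma partial_eq f i x l : has_partial f i x l -> partial i f x = l.
Proof.
  intro H. unfold partial.
  assert (E : exists l, has_partial f i x l) by (exists l; exact H).
  pose proof (epsilon_spec (inhabits 0) _ E) as H2.
  exact (uniqueness_limite _ _ _ _ H2 H).
Qed.

Lemma dpl_val f c l l' : derivable_pt_lim f c l' -> l' = l -> derivable_pt_lim f c l.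
Proof. intros H ->; exact H. Qed.

Lemma dpl_ext f g c l : (forall t, f t = g t) -> derivable_pt_lim f c l -> derivable_pt_lim g c l.
Proof. intros H D. replace g with f by (apply functional_extensionality; exact H). exact D. Qed.

Lemma sum_deriv (F : nat -> R -> R) (F' : nat -> R) t0 n :
  (forall i, (i <= n)%nat -> derivable_pt_lim (F i) t0 (F' i)) ->
  derivable_pt_lim (fun t => sum_f_R0 (fun i => F i t) n) t0 (sum_f_R0 F' n).
Proof.
  induction n; intro H.
  - simpl. apply H. lia.
  - simpl. apply (derivable_pt_lim_plus (fun t => sum_f_R0 (fun i => F i t) n) (F (S n))).
    + apply IHn. intros; apply H; lia.
    + apply H; lia.
Qed.

Lemma cont_const c x : continuous_at6 (fun _ => c) x.
Proof. intros e He. exists 1. split; [lra|]. intros. rewrite Rminus_diag, Rabs_R0. lra. Qed.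

Lemma cont_coord i x : continuous_at6 (fun y => coord y i) x.
Proof.
  intros e He. exists e. split; [lra|]. intros y Hy.
  destruct (Nat.lt_ge_cases i 6) as [Hi|Hi].
  - apply Hy; exact Hi.
  - replace (coord y i) with (coord y 5).
    replace (coord x i) with (coord x 5). apply Hy; lia.
    all: destruct i as [|[|[|[|[|[|i]]]]]]; try lia; reflexivity.
Qed.

Lemma cont_plus f g x : continuous_at6 f x -> continuous_at6 g x ->
  continuous_at6 (fun y => f y + g y) x.
Proof.
  intros Hf Hg e He.
  destruct (Hf (e/2)) as [d1 [Hd1 H1]]; [lra|].
  destruct (Hg (e/2)) as [d2 [Hd2 H2]]; [lra|].
  exists (Rmin d1 d2). split. apply Rmin_pos; lra.
  intros y Hy.
  assert (A1 : Rabs (f y - f x) < e/2) by (apply H1; intros i Hi; specialize (Hy i Hi); pose proof (Rmin_l d1 d2); lra).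
  assert (A2 : Rabs (g y - g x) < e/2) by (apply H2; intros i Hi; specialize (Hy i Hi); pose proof (Rmin_r d1 d2); lra).
  replace (f y + g y - (f x + g x)) with ((f y - f x) + (g y - g x)) by ring.
  pose proof (Rabs_triang (f y - f x) (g y - g x)). lra.
Qed.

Lemma cont_mult f g x : continuous_at6 f x -> continuous_at6 g x ->
  continuous_at6 (fun y => f y * g y) x.
Proof.
  intros Hf Hg e He.
  set (K := Rabs (g x) + 1).
  set (e1 := Rmin 1 (e / (2 * K))).
  assert (HK : 0 < K) by (unfold K; pose proof (Rabs_pos (g x)); lra).
  assert (He1 : 0 < e1) by (unfold e1; apply Rmin_pos; [lra| apply Rdiv_lt_0_compat; lra]).
  set (L := Rabs (f x) + 1).
  assert (HL : 0 < L) by (unfold L; pose proof (Rabs_pos (f x)); lra).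
  destruct (Hf e1) as [d1 [Hd1 H1]]; [lra|].
  destruct (Hg (e / (2 * L))) as [d2 [Hd2 H2]]; [apply Rdiv_lt_0_compat; lra|].
  exists (Rmin d1 d2). split. apply Rmin_pos; lra.
  intros y Hy.
  assert (A1 : Rabs (f y - f x) < e1) by (apply H1; intros i Hi; specialize (Hy i Hi); pose proof (Rmin_l d1 d2); lra).
  assert (A2 : Rabs (g y - g x) < e / (2*L)) by (apply H2; intros i Hi; specialize (Hy i Hi); pose proof (Rmin_r d1 d2); lra).
  replace (f y * g y - f x * g x) with (f y * (g y - g x) + g x * (f y - f x)) by ring.
  eapply Rle_lt_trans. apply Rabs_triang. rewrite !Rabs_mult.
  assert (Fy : Rabs (f y) <= L).
  { unfold L. replace (f y) with (f x + (f y - f x)) by ring.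
    eapply Rle_trans. apply Rabs_triang. pose proof (Rmin_l 1 (e/(2*K))). fold e1 in H. lra. }
  assert (B1 : Rabs (f y) * Rabs (g y - g x) < L * (e / (2 * L))).
  { apply Rle_lt_trans with (L * Rabs (g y - g x)).
    apply Rmult_le_compat_r; [apply Rabs_pos|lra].
    apply Rmult_lt_compat_l; lra. }
  assert (B2 : Rabs (g x) * Rabs (f y - f x) <= K * (e / (2 * K))).
  { apply Rmult_le_compat; try apply Rabs_pos. unfold K; lra.
    pose proof (Rmin_r 1 (e/(2*K))). fold e1 in H. lra. }
  replace (L * (e / (2 * L))) with (e/2) in B1 by (field; lra).
  replace (K * (e / (2 * K))) with (e/2) in B2 by (field; lra).
  lra.
Qed.

Inductive ex := EC (c : R) | EV (i : nat) | EA (a b : ex) | EM (a b : ex).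

Fixpoint ev (e : ex) (x : pt) : R :=
  match e with
  | EC c => c | EV i => coord x i
  | EA a b => ev a x + ev b x | EM a b => ev a x * ev b x
  end.

Fixpoint dex (j : nat) (e : ex) : ex :=
  match e with
  | EC _ => EC 0
  | EV i => EC (if Nat.eqb (Nat.min i 5) (Nat.min j 5) then 1 else 0)
  | EA a b => EA (dex j a) (dex j b)
  | EM a b => EA (EM (dex j a) b) (EM a (dex j b))
  end.

Lemma ex_partial e j x : has_partial (ev e) j x (ev (dex j e) x).
Proof.
  unfold has_partial. induction e; simpl.
  - apply derivable_pt_lim_const.
  - apply (dpl_ext (fun t => if Nat.eqb (Nat.min i 5) (Nat.min j 5) then t else coord x i)).
    { intro t. rewrite coord_upd. reflexivity. }
    destruct (Nat.eqb (Nat.min i 5) (Nat.min j 5)).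
    + apply derivable_pt_lim_id.
    + apply derivable_pt_lim_const.
  - apply (derivable_pt_lim_plus (fun t => ev e1 (upd x j t)) (fun t => ev e2 (upd x j t))); assumption.
  - eapply dpl_val.
    apply (derivable_pt_lim_mult (fun t => ev e1 (upd x j t)) (fun t => ev e2 (upd x j t))); eassumption.
    rewrite upd_id. ring.
Qed.

Lemma ex_cont e x : continuous_at6 (ev e) x.
Proof.
  induction e; simpl.
  - apply cont_const.
  - apply cont_coord.
  - apply cont_plus; assumption.
  - apply cont_mult; assumption.
Qed.

Lemma partial_ev_fun i e : partial i (ev e) = ev (dex i e).
Proof. apply functional_extensionality. intro x. apply partial_eq, ex_partial. Qed.

Fixpoint dexs (l : list nat) e := match l with nil => e | i :: l' => dex i (dexs l' e) end.

Lemma iter_ev l e : iter_partial l (ev e) = ev (dexs l e).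
Proof. induction l; simpl. reflexivity. rewrite IHl. apply partial_ev_fun. Qed.

Lemma ev_smooth e : smooth (ev e).
Proof.
  intros l _ x _. rewrite iter_ev. split. apply ex_cont.
  intros i _. eexists. apply ex_partial.
Qed.


Lemma smooth_has f l y i : smooth f -> (forall i, In i l -> (i < 6)%nat) -> U y -> (i < 6)%nat ->
  has_partial (iter_partial l f) i y (partial i (iter_partial l f) y).
Proof.
  intros Hs Hl Hy Hi. destruct (Hs l Hl y Hy) as [_ H]. destruct (H i Hi) as [d Hd].
  rewrite (partial_eq _ _ _ _ Hd). exact Hd.
Qed.

Lemma U_open x : U x -> exists r, 0 < r /\ forall y,
  (forall i, (i < 6)%nat -> Rabs (coord y i - coord x i) < r) -> U y.
Proof.
  intro Hx. set (r := Rmax (Rabs (p3 x)) (Rmax (Rabs (p4 x)) (Rabs (p5 x)))).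
  exists r. split.
  - unfold U in Hx. unfold r.
    destruct (Req_dec (p3 x) 0) as [E3|E3].
    + destruct (Req_dec (p4 x) 0) as [E4|E4].
      * assert (E5 : p5 x <> 0) by tauto.
        eapply Rlt_le_trans; [|apply Rmax_r]. eapply Rlt_le_trans; [|apply Rmax_r].
        apply Rabs_pos_lt; exact E5.
      * eapply Rlt_le_trans; [|apply Rmax_r]. eapply Rlt_le_trans; [|apply Rmax_l].
        apply Rabs_pos_lt; exact E4.
    + eapply Rlt_le_trans; [|apply Rmax_l]. apply Rabs_pos_lt; exact E3.
  - intros y Hy [A3 [A4 A5]].
    pose proof (Hy 3%nat ltac:(lia)) as B3. pose proof (Hy 4%nat ltac:(lia)) as B4.
    pose proof (Hy 5%nat ltac:(lia)) as B5. simpl in B3, B4, B5.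
    rewrite A3, Rminus_0_l, Rabs_Ropp in B3. rewrite A4, Rminus_0_l, Rabs_Ropp in B4.
    rewrite A5, Rminus_0_l, Rabs_Ropp in B5.
    unfold r in *.
    destruct (Rle_dec (Rabs (p4 x)) (Rabs (p5 x))).
    + rewrite (Rmax_right _ _ r0) in *.
      destruct (Rle_dec (Rabs (p3 x)) (Rabs (p5 x))).
      * rewrite (Rmax_right _ _ r1) in *. lra.
      * rewrite Rmax_left in * by lra. lra.
    + rewrite (Rmax_left (Rabs (p4 x))) in * by lra.
      destruct (Rle_dec (Rabs (p3 x)) (Rabs (p4 x))).
      * rewrite (Rmax_right _ _ r0) in *. lra.
      * rewrite Rmax_left in * by lra. lra.
Qed.

Section Sch.
Variables (f : pt -> R) (x : pt) (k l : nat).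
Hypotheses (Hk : (k < 6)%nat) (Hl : (l < 6)%nat) (Hkl : k <> l).

Definition P s t := upd (upd x k s) l t.

Lemma P_k s t : coord (P s t) k = s.
Proof.
  unfold P. rewrite !coord_upd.
  replace (Nat.min k 5) with k by lia. replace (Nat.min l 5) with l by lia.
  rewrite (proj2 (Nat.eqb_neq k l) Hkl), Nat.eqb_refl. reflexivity.
Qed.
Lemma P_l s t : coord (P s t) l = t.
Proof. unfold P. rewrite !coord_upd. rewrite Nat.eqb_refl. reflexivity. Qed.
Lemma P_o s t m : m <> k -> m <> l -> (m < 6)%nat -> coord (P s t) m = coord x m.
Proof.
  intros. unfold P. rewrite !coord_upd.
  replace (Nat.min k 5) with k by lia. replace (Nat.min l 5) with l by lia.
  replace (Nat.min m 5) with m by lia.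
  rewrite (proj2 (Nat.eqb_neq m l)), (proj2 (Nat.eqb_neq m k)) by assumption. reflexivity.
Qed.
Lemma P_updk s t u : upd (P s t) k u = P u t.
Proof. unfold P. rewrite (upd_comm _ l k) by auto. rewrite upd_upd. reflexivity. Qed.
Lemma P_updl s t u : upd (P s t) l u = P s u.
Proof. unfold P. apply upd_upd. Qed.
Lemma P_x : P (coord x k) (coord x l) = x.
Proof. unfold P. rewrite !upd_id. reflexivity. Qed.

Lemma P_near s t d : Rabs (s - coord x k) < d -> Rabs (t - coord x l) < d -> 0 < d ->
  forall i, (i < 6)%nat -> Rabs (coord (P s t) i - coord x i) < d.
Proof.
  intros Hs Ht Hd i Hi.
  destruct (Nat.eq_dec i k) as [->|Nk]. rewrite P_k; exact Hs.
  destruct (Nat.eq_dec i l) as [->|Nl]. rewrite P_l; exact Ht.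
  rewrite P_o by assumption. rewrite Rminus_diag, Rabs_R0. exact Hd.
Qed.

Lemma dk g s t d : has_partial g k (P s t) d -> derivable_pt_lim (fun u => g (P u t)) s d.
Proof.
  unfold has_partial. rewrite P_k. apply dpl_ext. intro u. rewrite P_updk. reflexivity.
Qed.
Lemma dl g s t d : has_partial g l (P s t) d -> derivable_pt_lim (fun u => g (P s u)) t d.
Proof.
  unfold has_partial. rewrite P_l. apply dpl_ext. intro u. rewrite P_updl. reflexivity.
Qed.

Lemma schwarz_aux : smooth f -> U x ->
  partial l (partial k f) x = partial k (partial l f) x.
Proof.
  intros Hs Hx.
  set (a := coord x k). set (b := coord x l).
  set (H1 := fun y => partial l (partial k f) y).
  set (H2 := fun y => partial k (partial l f) y).
  assert (C1 : continuous_at6 H1 x).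
  { apply (Hs (l :: k :: nil)); [intros i [<-|[<-|[]]]; auto|exact Hx]. }
  assert (C2 : continuous_at6 H2 x).
  { apply (Hs (k :: l :: nil)); [intros i [<-|[<-|[]]]; auto|exact Hx]. }
  destruct (U_open x Hx) as [r [Hr HU]].
  change (H1 x = H2 x).
  destruct (Req_dec (H1 x) (H2 x)) as [EE|NE]; [exact EE|exfalso].
  assert (Hpos : 0 < Rabs (H1 x - H2 x)) by (apply Rabs_pos_lt; intro; apply NE; lra).
  set (e := Rabs (H1 x - H2 x) / 4).
  assert (He : 0 < e) by (unfold e; lra).
  destruct (C1 e He) as [d1 [Hd1 E1]]. destruct (C2 e He) as [d2 [Hd2 E2]].
  set (d := Rmin r (Rmin d1 d2)).
  assert (Hd : 0 < d) by (unfold d; repeat apply Rmin_pos; lra).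
  assert (dr : d <= r) by apply Rmin_l.
  assert (dd1 : d <= d1) by (unfold d; eapply Rle_trans; [apply Rmin_r|apply Rmin_l]).
  assert (dd2 : d <= d2) by (unfold d; eapply Rle_trans; [apply Rmin_r|apply Rmin_r]).
  set (h := d / 2).
  assert (Hh : 0 < h) by (unfold h; lra).
  assert (Box : forall s t, a <= s <= a + h -> b <= t <= b + h ->
     U (P s t) /\ forall i, (i < 6)%nat -> Rabs (coord (P s t) i - coord x i) < d).
  { intros s t Hs' Ht'.
    assert (N : forall i, (i < 6)%nat -> Rabs (coord (P s t) i - coord x i) < d).
    { apply P_near; auto; apply Rabs_def1; unfold h in *; fold a b; lra. }
    split; auto. apply HU. intros i Hi. specialize (N i Hi). lra. }
  assert (Nil : forall i, In i nil -> (i < 6)%nat) by (intros i []).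
  assert (Lk : forall i, In i (k :: nil) -> (i < 6)%nat) by (intros i [<-|[]]; auto).
  assert (Ll : forall i, In i (l :: nil) -> (i < 6)%nat) by (intros i [<-|[]]; auto).
  destruct (MVT_cor2 (fun s => f (P s (b + h)) - f (P s b))
     (fun s => partial k f (P s (b + h)) - partial k f (P s b)) a (a + h)) as [c [Ec Hc]].
  { lra. }
  { intros c Hc. apply derivable_pt_lim_minus; apply dk.
    - apply (smooth_has f nil); auto. apply Box; lra.
    - apply (smooth_has f nil); auto. apply Box; lra. }
  destruct (MVT_cor2 (fun t => partial k f (P c t)) (fun t => H1 (P c t)) b (b + h)) as [e1 [Ee1 He1]].
  { lra. }
  { intros t Ht. apply dl. apply (smooth_has f (k :: nil)); auto. apply Box; lra. }
  destruct (MVT_cor2 (fun t => f (P (a + h) t) - f (P a t))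
     (fun t => partial l f (P (a + h) t) - partial l f (P a t)) b (b + h)) as [c' [Ec' Hc']].
  { lra. }
  { intros t Ht. apply derivable_pt_lim_minus; apply dl.
    - apply (smooth_has f nil); auto. apply Box; lra.
    - apply (smooth_has f nil); auto. apply Box; lra. }
  destruct (MVT_cor2 (fun s => partial l f (P s c')) (fun s => H2 (P s c')) a (a + h)) as [e2 [Ee2 He2]].
  { lra. }
  { intros s Hs'. apply dk. apply (smooth_has f (l :: nil)); auto. apply Box; lra. }
  cbv beta in Ec, Ee1, Ec', Ee2.
  assert (Eq : H1 (P c e1) = H2 (P e2 c')).
  { assert (h * h * H1 (P c e1) = h * h * H2 (P e2 c')).
    { replace (a + h - a) with h in Ec by ring. replace (b + h - b) with h in *by ring.
      replace (a + h - a) with h in Ee2 by ring.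
      transitivity (f (P (a + h) (b + h)) - f (P (a + h) b) - (f (P a (b + h)) - f (P a b))).
      - rewrite Ec, Ee1. ring.
      - replace (f (P (a + h) (b + h)) - f (P (a + h) b) - (f (P a (b + h)) - f (P a b)))
          with (f (P (a + h) (b + h)) - f (P a (b + h)) - (f (P (a + h) b) - f (P a b))) by ring.
        rewrite Ec', Ee2. ring. }
    apply Rmult_eq_reg_l with (h * h). exact H. apply Rgt_not_eq. apply Rmult_lt_0_compat; lra. }
  assert (B1 : Rabs (H1 (P c e1) - H1 x) < e).
  { apply E1. intros i Hi. destruct (Box c e1) as [_ N]; try lra. specialize (N i Hi). lra. }
  assert (B2 : Rabs (H2 (P e2 c') - H2 x) < e).
  { apply E2. intros i Hi. destruct (Box e2 c') as [_ N]; try lra. specialize (N i Hi). lra. }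
  rewrite Eq in B1.
  assert (Rabs (H1 x - H2 x) < 2 * e).
  { replace (H1 x - H2 x) with ((H2 (P e2 c') - H2 x) + - (H2 (P e2 c') - H1 x)) by ring.
    eapply Rle_lt_trans. apply Rabs_triang. rewrite Rabs_Ropp. lra. }
  unfold e in H. lra.
Qed.
End Sch.

Lemma schwarz f x i j : smooth f -> U x -> (i < 6)%nat -> (j < 6)%nat ->
  partial i (partial j f) x = partial j (partial i f) x.
Proof.
  intros Hs Hx Hi Hj. destruct (Nat.eq_dec i j) as [->|N]. reflexivity.
  apply schwarz_aux; auto.
Qed.


Definition z0 := mkpt 0 0 0 0 0 0.
Definition dPi A mu0 j i k :=
  Pi (mu_lin A mu0) (upd z0 j 1) i k - Pi (mu_lin A mu0) z0 i k.

Lemma Pi_aff A mu0 x j t i k : (j < 6)%nat ->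
  Pi (mu_lin A mu0) (upd x j t) i k = Pi (mu_lin A mu0) x i k + (t - coord x j) * dPi A mu0 j i k.
Proof.
  intro Hj. destruct x.
  destruct j as [|[|[|[|[|[|j]]]]]]; try lia;
  destruct i as [|[|[|[|[|[|i]]]]]]; destruct k as [|[|[|[|[|[|k]]]]]];
  unfold dPi, Pi, mu_lin, gam; simpl; ring.
Qed.

Lemma Pi_deriv A mu0 x j i k : (j < 6)%nat ->
  derivable_pt_lim (fun t => Pi (mu_lin A mu0) (upd x j t) i k) (coord x j) (dPi A mu0 j i k).
Proof.
  intro Hj. apply (dpl_ext (fun t => Pi (mu_lin A mu0) x i k + (t - coord x j) * dPi A mu0 j i k)).
  { intro t. rewrite Pi_aff; auto. }
  eapply dpl_val.
  apply (derivable_pt_lim_plus (fct_cte (Pi (mu_lin A mu0) x i k))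
     (fun t => (t - coord x j) * dPi A mu0 j i k)).
  apply derivable_pt_lim_const.
  apply (derivable_pt_lim_mult (fun t => t - coord x j) (fct_cte (dPi A mu0 j i k))).
  apply (derivable_pt_lim_minus id (fct_cte (coord x j))).
  apply derivable_pt_lim_id. apply derivable_pt_lim_const. apply derivable_pt_lim_const.
  unfold fct_cte, id. ring.
Qed.

Definition Dbr A mu0 g h j x :=
  sum_f_R0 (fun i => sum_f_R0 (fun k =>
    partial j (partial i g) x * Pi (mu_lin A mu0) x i k * partial k h x
    + partial i g x * dPi A mu0 j i k * partial k h x
    + partial i g x * Pi (mu_lin A mu0) x i k * partial j (partial k h) x) 5) 5.

Lemma bracket_partial A mu0 g h x j : smooth g -> smooth h -> U x -> (j < 6)%nat ->
  has_partial (bracket (mu_lin A mu0) g h) j x (Dbr A mu0 g h j x).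
Proof.
  intros Hg Hh Hx Hj. unfold has_partial, bracket, Dbr.
  apply (sum_deriv (fun i t => sum_f_R0 (fun k =>
     partial i g (upd x j t) * Pi (mu_lin A mu0) (upd x j t) i k * partial k h (upd x j t)) 5)).
  intros i Hi.
  apply (sum_deriv (fun k t =>
     partial i g (upd x j t) * Pi (mu_lin A mu0) (upd x j t) i k * partial k h (upd x j t))).
  intros k Hk.
  assert (Dg : derivable_pt_lim (fun t => partial i g (upd x j t)) (coord x j) (partial j (partial i g) x)).
  { apply (smooth_has g (i :: nil)); auto. intros m [<-|[]]; lia. }
  assert (Dh : derivable_pt_lim (fun t => partial k h (upd x j t)) (coord x j) (partial j (partial k h) x)).
  { apply (smooth_has h (k :: nil)); auto. intros m [<-|[]]; lia. }
  eapply dpl_val.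
  apply (derivable_pt_lim_mult (fun t => partial i g (upd x j t) * Pi (mu_lin A mu0) (upd x j t) i k)
     (fun t => partial k h (upd x j t))).
  apply (derivable_pt_lim_mult (fun t => partial i g (upd x j t)) (fun t => Pi (mu_lin A mu0) (upd x j t) i k)).
  exact Dg. apply Pi_deriv; auto. exact Dh.
  rewrite upd_id. ring.
Qed.

Lemma jac_expand A mu0 f g h x : smooth g -> smooth h -> U x ->
  bracket (mu_lin A mu0) f (bracket (mu_lin A mu0) g h) x =
  sum_f_R0 (fun i => sum_f_R0 (fun j =>
    partial i f x * Pi (mu_lin A mu0) x i j * Dbr A mu0 g h j x) 5) 5.
Proof.
  intros Hg Hh Hx. unfold bracket at 1. apply sum_eq. intros i Hi. apply sum_eq. intros j Hj.
  rewrite (partial_eq _ _ _ _ (bracket_partial A mu0 g h x j Hg Hh Hx ltac:(lia))). reflexivity.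
Qed.

Definition pp (g : pt -> R) i j x := partial (Nat.min i j) (partial (Nat.max i j) g) x.

Lemma canon g x i j : smooth g -> U x -> (i < 6)%nat -> (j < 6)%nat ->
  partial i (partial j g) x = pp g i j x.
Proof.
  intros. unfold pp. destruct (Nat.le_ge_cases i j).
  - rewrite Nat.min_l, Nat.max_r by auto. reflexivity.
  - rewrite Nat.min_r, Nat.max_l by auto. apply schwarz; auto.
Qed.


Section J.
Variables (A : nat -> nat -> R) (mu0 : nat -> R).
Local Notation mu := (mu_lin A mu0).

Definition uf f x j := sum_f_R0 (fun i => partial i f x * Pi mu x i j) 5.
Definition Tt g h j x := sum_f_R0 (fun k => sum_f_R0 (fun l => partial k g x * dPi A mu0 j k l * partial l h x) 5) 5.
Definition SG g j x (w : nat -> R) := sum_f_R0 (fun k => partial j (partial k g) x * w k) 5.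

Lemma Dbr_split g h j x :
  Dbr A mu0 g h j x = - SG g j x (uf h x) + SG h j x (uf g x) + Tt g h j x.
Proof.
  unfold Dbr, SG, uf, Tt. cbv beta iota fix delta [sum_f_R0].
  unfold Pi. ring.
Qed.

Lemma br_split f g h x : smooth g -> smooth h -> U x ->
  bracket mu f (bracket mu g h) x = sum_f_R0 (fun j => uf f x j * Dbr A mu0 g h j x) 5.
Proof.
  intros. rewrite jac_expand by auto. unfold uf. cbv beta iota fix delta [sum_f_R0]. ring.
Qed.

Lemma second_order f g h x : smooth f -> smooth g -> smooth h -> U x ->
  sum_f_R0 (fun j => uf f x j * (- SG g j x (uf h x) + SG h j x (uf g x))) 5
  + sum_f_R0 (fun j => uf g x j * (- SG h j x (uf f x) + SG f j x (uf h x))) 5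
  + sum_f_R0 (fun j => uf h x j * (- SG f j x (uf g x) + SG g j x (uf f x))) 5 = 0.
Proof.
  intros Hf Hg Hh Hx. unfold SG. cbv beta iota fix delta [sum_f_R0].
  rewrite !(canon f x) by (auto; lia).
  rewrite !(canon g x) by (auto; lia).
  rewrite !(canon h x) by (auto; lia).
  cbv beta iota fix delta [pp Nat.min Nat.max].
  ring.
Qed.

Lemma first_order f g h x :
  A 1%nat 0%nat = A 0%nat 1%nat -> A 2%nat 0%nat = A 0%nat 2%nat -> A 2%nat 1%nat = A 1%nat 2%nat ->
  sum_f_R0 (fun j => uf f x j * Tt g h j x) 5
  + sum_f_R0 (fun j => uf g x j * Tt h f j x) 5
  + sum_f_R0 (fun j => uf h x j * Tt f g j x) 5 = 0.
Proof.
  intros S10 S20 S21. unfold uf, Tt.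
  unfold dPi, Pi, mu_lin, gam, z0. cbn [sum_f_R0 coord upd p0 p1 p2 p3 p4 p5 Nat.add].
  rewrite S10, S20, S21.
  ring.
Qed.
End J.


Lemma brEV mu a F x : (a < 6)%nat ->
  bracket mu (ev (EV a)) F x = sum_f_R0 (fun j => Pi mu x a j * partial j F x) 5.
Proof.
  intro Ha. unfold bracket.
  transitivity (sum_f_R0 (fun i => sum_f_R0 (fun j =>
     (if Nat.eqb (Nat.min a 5) (Nat.min i 5) then 1 else 0) * Pi mu x i j * partial j F x) 5) 5).
  { apply sum_eq; intros i Hi. rewrite partial_ev_fun. reflexivity. }
  destruct a as [|[|[|[|[|[|a]]]]]]; try lia; cbn [sum_f_R0 Nat.min Nat.eqb]; ring.
Qed.

Lemma brEVEV A mu0 a b : (a < 6)%nat -> (b < 6)%nat ->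
  bracket (mu_lin A mu0) (ev (EV a)) (ev (EV b)) = fun y => Pi (mu_lin A mu0) y a b.
Proof.
  intros Ha Hb. apply functional_extensionality; intro y. rewrite brEV by auto.
  transitivity (sum_f_R0 (fun j => Pi (mu_lin A mu0) y a j *
     (if Nat.eqb (Nat.min b 5) (Nat.min j 5) then 1 else 0)) 5).
  { apply sum_eq; intros i Hi. rewrite partial_ev_fun. reflexivity. }
  destruct b as [|[|[|[|[|[|b]]]]]]; try lia; cbn [sum_f_R0 Nat.min Nat.eqb]; ring.
Qed.

Lemma jac_lin A mu0 a b c x : (a < 6)%nat -> (b < 6)%nat -> (c < 6)%nat ->
  bracket (mu_lin A mu0) (ev (EV a)) (bracket (mu_lin A mu0) (ev (EV b)) (ev (EV c))) x
  = sum_f_R0 (fun j => Pi (mu_lin A mu0) x a j * dPi A mu0 j b c) 5.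
Proof.
  intros. rewrite brEVEV, brEV by auto. apply sum_eq; intros j Hj.
  rewrite (partial_eq _ _ _ _ (Pi_deriv A mu0 x j b c ltac:(lia))). reflexivity.
Qed.

Lemma conv A mu0 m : is_Poisson (mu_lin A mu0) -> (m = 3 \/ m = 4 \/ m = 5)%nat ->
  let x := upd z0 m 1 in
  sum_f_R0 (fun j => Pi (mu_lin A mu0) x 0 j * dPi A mu0 j 1 2) 5
  + sum_f_R0 (fun j => Pi (mu_lin A mu0) x 1 j * dPi A mu0 j 2 0) 5
  + sum_f_R0 (fun j => Pi (mu_lin A mu0) x 2 j * dPi A mu0 j 0 1) 5 = 0.
Proof.
  intros HP Hm x. rewrite <- !jac_lin by lia. apply HP; try apply ev_smooth.
  unfold x, U; destruct Hm as [ -> | [ -> | -> ] ]; simpl; lra.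
Qed.

Lemma conv_all A mu0 : is_Poisson (mu_lin A mu0) ->
  A 1%nat 2%nat = A 2%nat 1%nat /\ A 0%nat 2%nat = A 2%nat 0%nat /\ A 0%nat 1%nat = A 1%nat 0%nat.
Proof.
  intro HP.
  pose proof (conv A mu0 3 HP ltac:(auto)) as E3.
  pose proof (conv A mu0 4 HP ltac:(auto)) as E4.
  pose proof (conv A mu0 5 HP ltac:(auto)) as E5.
  cbv zeta in E3, E4, E5.
  unfold dPi, Pi, mu_lin, gam, z0 in E3, E4, E5.
  cbn [sum_f_R0 coord upd p0 p1 p2 p3 p4 p5 Nat.add] in E3, E4, E5.
  ring_simplify in E3. ring_simplify in E4. ring_simplify in E5.
  repeat split; lra.
Qed.

Definition S3 (F : nat -> ex) := EA (EA (F 0%nat) (F 1%nat)) (F 2%nat).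
Definition ecas A mu0 :=
  EA (EM (EC (/2)) (S3 (fun k => EM (EV (3+k)) (S3 (fun j => EM (EC (A k j)) (EV (3+j)))))))
     (S3 (fun k => EM (EA (EV k) (EC (mu0 k))) (EV (3+k)))).

Lemma Cas_ev A mu0 : Cas A mu0 = ev (ecas A mu0).
Proof.
  apply functional_extensionality; intro x.
  unfold Cas, ecas, S3, gam, Mc. cbn [sum_f_R0 ev Nat.add]. ring.
Qed.

Lemma casimir A mu0 : A 1%nat 0%nat = A 0%nat 1%nat -> A 2%nat 0%nat = A 0%nat 2%nat ->
  A 2%nat 1%nat = A 1%nat 2%nat -> Casimir (mu_lin A mu0) (Cas A mu0).
Proof.
  intros S10 S20 S21. rewrite Cas_ev. split. apply ev_smooth.
  intros x Hx i Hi. cbn [sum_f_R0]. rewrite !partial_ev_fun.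
  unfold ecas, S3, Pi, mu_lin, gam.
  destruct i as [|[|[|[|[|[|i]]]]]]; try lia;
  cbn [sum_f_R0 coord ev dex Nat.add Nat.min Nat.eqb]; rewrite ?S10, ?S20, ?S21; field.
Qed.


Theorem mainTheorem7 (A : nat -> nat -> R) (mu0 : nat -> R) :
  (is_Poisson (mu_lin A mu0) <->
     (forall i j, (i < 3)%nat -> (j < 3)%nat -> A i j = A j i)) /\
  ((forall i j, (i < 3)%nat -> (j < 3)%nat -> A i j = A j i) ->
     Casimir (mu_lin A mu0) (Cas A mu0)).
Proof.
  split; [split|].
  - intros HP i j Hi Hj. destruct (conv_all A mu0 HP) as [E12 [E02 E01]].
    destruct i as [|[|[|i]]]; try lia; destruct j as [|[|[|j]]]; try lia; auto.
  - intros Hs f g h Hf Hg Hh x Hx.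
    assert (S10 := Hs 1%nat 0%nat ltac:(lia) ltac:(lia)).
    assert (S20 := Hs 2%nat 0%nat ltac:(lia) ltac:(lia)).
    assert (S21 := Hs 2%nat 1%nat ltac:(lia) ltac:(lia)).
    rewrite (br_split A mu0 f g h x Hg Hh Hx), (br_split A mu0 g h f x Hh Hf Hx),
      (br_split A mu0 h f g x Hf Hg Hx).
    pose proof (second_order A mu0 f g h x Hf Hg Hh Hx) as E1.
    pose proof (first_order A mu0 f g h x S10 S20 S21) as E2.
    cbn [sum_f_R0] in *. rewrite !Dbr_split. lra.
  - intro Hs. apply casimir; apply Hs; lia.
Qed.
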